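(* Let $M$ be an ergodic aperiodic marker process. Then for every $m\ge1$ there is a marker process $M'$ which is a finitary dilution of $M$ and has minimal gap length at least $m$.
   Context: A marker process is a non-trivial $\{0,1\}$-valued $\mathbb{Z}$-process. Aperiodic: a.s.\ there is no $p\ge1$ with $M_{n+p}=M_n$ for all $n$. A finitary dilution of $M$ is a marker process $M'$ which is a finitary factor of $M$ (shift-equivariant, with $M'_0$ a.s.\ determined by $M$ on a random finite window) such that $M'_n\le M_n$ for all $n$. The occurrences of $M$ partition $\mathbb{Z}$ into intervals, each starting at a $1$ of $M$ and ending just before the next; $I^M_0$ denotes the interval containing $0$. The minimal gap length of $M$ is the largest $m\ge1$ with $|I^M_0|\ge m$ almost surely. *)

(* Defs.v *)
From mathcomp Require Import all_boot all_order all_algebra.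
From mathcomp Require Import all_classical all_reals all_analysis.
Set Implicit Arguments. Unset Strict Implicit. Unset Printing Implicit Defensive.
Import Order.TTheory GRing.Theory Num.Theory.
Local Open Scope classical_set_scope.
Local Open Scope ring_scope.

(* Two-sided {0,1}-sequences (false = 0, true = 1). *)
Definition bseq := int -> bool.

Definition coord_sets : set (set bseq) :=
  [set A | exists (n : int) (b : bool), A = [set x | x n = b]].

(* The path space {0,1}^Z with the product sigma-algebra. *)
Definition Omega := g_sigma_algebraType coord_sets.

Definition shift (x : Omega) : Omega := fun n => x (n + 1).

Definition as_ (R : realType) (mu : set Omega -> \bar R) (Q : Omega -> Prop) :=
  almost_everywhere mu [set x | Q x].

(* A Z-process with values in {0,1} is given by its law mu, a probability on
   Omega; it is a (stationary) Z-process when mu is shift-invariant. *)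
Definition stationary (R : realType) (mu : set Omega -> \bar R) :=
  forall A : set Omega, measurable A -> mu (shift @^-1` A) = mu A.

Definition nontrivial (R : realType) (mu : set Omega -> \bar R) :=
  ~ as_ mu (fun x => forall n, x n = false).

Definition marker_process (R : realType) (mu : set Omega -> \bar R) :=
  stationary mu /\ nontrivial mu.

Definition ergodic (R : realType) (mu : set Omega -> \bar R) :=
  forall A : set Omega, measurable A -> shift @^-1` A = A ->
    mu A = 0%E \/ mu A = 1%E.

Definition aperiodic (R : realType) (mu : set Omega -> \bar R) :=
  as_ mu (fun x => ~ exists p : nat, (0 < p)%N /\ forall n : int, x (n + p%:Z) = x n).

(* phi : Omega -> Omega is a finitary dilution of the process with law mu;
   the diluted process is M' = phi(M), whose law is pushforward mu phi. *)
Definition finitary_dilution (R : realType) (mu : set Omega -> \bar R)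
    (phi : Omega -> Omega) :=
  [/\ measurable_fun setT phi,
      (forall x, phi (shift x) = shift (phi x)),
      as_ mu (fun x => exists r : nat, forall y : Omega,
                (forall k : int, - r%:Z <= k <= r%:Z -> y k = x k) ->
                phi y 0 = phi x 0),
      (forall x n, (phi x n <= x n)%N) &
      marker_process (pushforward mu phi)].

(* I_0 of a sequence y: the interval (between consecutive 1s, starting at a 1)
   containing 0.  n and 0 lie in the same interval iff y has no 1 at any
   position k with min(0,n) < k <= max(0,n). *)
Definition I0 (y : bseq) : set int :=
  [set n | forall k : int, Num.min 0 n < k <= Num.max 0 n -> y k = false].

(* |I_0(y)| >= m (I_0 may be infinite). *)
Definition I0_size_ge (m : nat) (y : bseq) :=
  exists s : seq int, [/\ uniq s, size s = m & forall n, n \in s -> I0 y n].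

Definition min_gap_ge (R : realType) (mu : set Omega -> \bar R) (m : nat) :=
  as_ mu (I0_size_ge m).

(* Main.v *)
Require Import Defs.
From mathcomp Require Import all_boot all_order all_algebra.
From mathcomp Require Import all_classical all_reals all_analysis.
From mathcomp Require Import zify.

Section Helpers.
Import Order.TTheory GRing.Theory Num.Theory.
Local Open Scope classical_set_scope.
Local Open Scope ring_scope.

Definition phiw (a : nat) (w : seq bool) (x : Omega) : Omega :=
  fun n => [forall i : 'I_(size w), x (n - a%:Z + (i : nat)%:Z) == nth false w i].

Definition valid (m a : nat) (w : seq bool) :=
  [/\ (a < size w)%N, nth false w a &
     forall d : nat, (0 < d < m)%N -> exists i : nat,
       (i + d < size w)%N /\ nth false w i != nth false w (i + d)].

Lemma phiw_sep m a w x n d : valid m a w -> (0 < d < m)%N ->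
  phiw a w x n -> phiw a w x (n + d%:Z) -> False.
Proof.
move=> [_ _ V] hd /forallP H1 /forallP H2.
have [i [hi hne]] := V d hd.
have hi' : (i < size w)%N by lia.
have e1 := H2 (Ordinal hi'); have e2 := H1 (Ordinal hi).
move: e1 e2 => /= /eqP e1 /eqP e2.
move/negP: hne; apply; apply/eqP; rewrite -e1 -e2; congr x; lia.
Qed.

Lemma coord_meas (n : int) (b : bool) : measurable ([set x : Omega | x n = b]).
Proof. by apply: sub_sigma_algebra; exists n, b. Qed.

Lemma phiw_pre_true a w n :
  [set x : Omega | phiw a w x n = true] =
  \bigcap_(i in [set i : nat | (i < size w)%N])
     [set x : Omega | x (n - a%:Z + i%:Z) = nth false w i].
Proof.
apply/seteqP; split => x /=.
  rewrite /phiw => /forallP H i /= hi; apply/eqP; exact: (H (Ordinal hi)).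
move=> H; rewrite /phiw; apply/forallP => i /=; by rewrite (H i (ltn_ord i)).
Qed.

Lemma phiw_meas a w : measurable_fun setT (phiw a w).
Proof.
apply: (@measurability _ _ Omega Omega setT (phiw a w) coord_sets) => //.
move=> _ [B [n [b ->]] <-]; rewrite setTI.
have -> : phiw a w @^-1` [set x | x n = b] = [set x | phiw a w x n = b] by [].
have mT : measurable [set x : Omega | phiw a w x n = true].
  rewrite phiw_pre_true; apply: bigcap_measurableType => i _; exact: coord_meas.
case: b; first exact: mT.
have -> : [set x : Omega | phiw a w x n = false] = ~` [set x | phiw a w x n = true].
  by apply/seteqP; split => x /=; case: (phiw a w x n).
exact: measurableC.
Qed.

Lemma phiw_shift a w (x : Omega) : phiw a w (Defs.shift x) = Defs.shift (phiw a w x).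
Proof.
apply/funext => n; rewrite /phiw /Defs.shift; apply: eq_forallb => i.
by congr (x _ == _); lia.
Qed.

Lemma phiw_le a w m (x : Omega) n : valid m a w -> (phiw a w x n <= x n)%N.
Proof.
move=> [ha hw _]; case E: (phiw a w x n) => //.
move/forallP: E => /(_ (Ordinal ha)) /= /eqP.
rewrite (_ : n - a%:Z + a%:Z = n); last by lia.
by move=> ->; rewrite hw.
Qed.

Lemma phiw_finitary a w (x y : Omega) :
  (forall k : int, - (a + size w)%:Z <= k <= (a + size w)%:Z -> y k = x k) ->
  phiw a w y 0 = phiw a w x 0.
Proof.
move=> H; apply: eq_forallb => i; rewrite H //.
have := ltn_ord i; lia.
Qed.

Lemma bound_exists (m : nat) (Q : nat -> nat -> Prop) :
  (forall d L L', (L <= L')%N -> Q d L -> Q d L') ->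
  (forall d, (d < m)%N -> exists L, Q d L) ->
  exists L, forall d, (d < m)%N -> Q d L.
Proof.
move=> mono; elim: m => [|m IH] H; first by exists 0%N.
have [L1 H1] := IH (fun d hd => H d (ltnW hd)).
have [L2 H2] := H m (ltnSn m).
exists (maxn L1 L2) => d; rewrite ltnS leq_eqVlt => /orP[/eqP ->|hd].
  by apply: mono H2; exact: leq_maxr.
by apply: (mono _ L1); [exact: leq_maxl | exact: H1].
Qed.

Lemma exists_window m (x : Omega) (t : int) : x t = true ->
  (forall d : nat, (0 < d)%N -> exists n : int, x (n + d%:Z) != x n) ->
  exists a w, valid m a w /\ phiw a w x t.
Proof.
move=> xt Hap.
have [L0 HL0] : exists L, forall d, (d < m)%N -> (0 < d)%N -> exists n : int,
   x (n + d%:Z) != x n /\ - L%:Z <= n /\ n + d%:Z <= L%:Z.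
  apply: bound_exists.
- move=> d L L' hL H hd; have [n [h1 [h2 h3]]] := H hd.
  by exists n; split => //; lia.
- move=> d _; case: (posnP d) => [->|hd]; first by exists 0%N.
  have [n hn] := Hap d hd.
  exists (absz n + d)%N => _; exists n; split => //; lia.
set L := maxn L0 (absz t).
have HL : forall d, (0 < d < m)%N -> exists n : int,
   x (n + d%:Z) != x n /\ - L%:Z <= n /\ n + d%:Z <= L%:Z.
  move=> d /andP[d0 dm]; have [n [h1 [h2 h3]]] := HL0 d dm d0.
  exists n; split => //; rewrite /L; lia.
have tL : - L%:Z <= t <= L%:Z by rewrite /L; lia.
pose w := [seq x (- L%:Z + i%:Z) | i <- iota 0 (L + L).+1].
have sw : size w = (L + L).+1 by rewrite size_map size_iota.
have nw : forall i, (i < (L + L).+1)%N -> nth false w i = x (- L%:Z + i%:Z).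
  by move=> i hi; rewrite (nth_map 0%N) ?size_iota // nth_iota.
exists (absz (t + L%:Z)), w; split; first split.
- rewrite sw; lia.
- rewrite nw; last by lia.
  have -> : - L%:Z + (absz (t + L%:Z))%:Z = t by lia.
  by [].
- move=> d hd; have [n [h1 [h2 h3]]] := HL d hd.
  exists (absz (n + L%:Z)); split; first by rewrite sw; lia.
  rewrite !nw; try lia.
  have -> : - L%:Z + (absz (n + L%:Z))%:Z = n by lia.
  have -> : - L%:Z + (absz (n + L%:Z) + d)%:Z = n + d%:Z by lia.
  by rewrite eq_sym.
- apply/forallP => i; rewrite nw; last by have := ltn_ord i; rewrite -sw.
  by apply/eqP; congr x; lia.
Qed.


Lemma I0_window (y : Defs.bseq) (k : int) (m : nat) : k <= 0 -> 0 <= k + m%:Z - 1 ->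
  (forall j : int, k < j <= k + m%:Z - 1 -> y j = false) -> I0_size_ge m y.
Proof.
move=> k0 km Hy; exists [seq k + i%:Z | i <- iota 0 m]; split.
- rewrite map_inj_uniq ?iota_uniq // => i j /= H; lia.
- by rewrite size_map size_iota.
- move=> n /mapP [i]; rewrite mem_iota => /andP[_ ilt] -> j hj.
  apply: Hy; lia.
Qed.

Lemma gap_lemma (y : Defs.bseq) (m : nat) : (1 <= m)%N ->
  (forall (n : int) (d : nat), (0 < d < m)%N -> y n -> y (n + d%:Z) -> False) ->
  I0_size_ge m y.
Proof.
move=> m1 Hs.
case: (pselect (exists k : int, 1 - m%:Z <= k <= 0 /\ y k)).
- move=> [k [hk yk]]; apply: (@I0_window y k); try lia.
  move=> j hj; apply/negP => yj.
  apply: (Hs k (absz (j - k))); [lia | by [] |].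
  by have -> : k + (absz (j - k))%:Z = j by lia.
- move=> Hn; apply: (@I0_window y (1 - m%:Z)); try lia.
  move=> j hj; apply/negP => yj; apply: Hn; exists j; split => //; lia.
Qed.

Lemma as_all (R : realType) (P : probability Omega R) (Q : Omega -> Prop) :
  (forall x, Q x) -> as_ P Q.
Proof.
move=> H; exists set0; split => //.
by move=> x /= /(_ (H x)).
Qed.

Lemma as_push (R : realType) (P : probability Omega R) (phi : Omega -> Omega)
  (Q : Omega -> Prop) : measurable_fun setT phi ->
  as_ (pushforward P phi) Q -> as_ P (fun x => Q (phi x)).
Proof.
move=> mphi [N [mN N0 sub]]; exists (phi @^-1` N); split.
- by have := mphi measurableT N mN; rewrite setTI.
- exact: N0.
- by move=> x /= nQ; apply: sub.
Qed.

End Helpers.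

Local Open Scope classical_set_scope.

Theorem lemma3p11 (R : realType) (P : probability Omega R) :
  marker_process P -> ergodic P -> aperiodic P ->
  forall m : nat, (1 <= m)%N ->
  exists phi : Omega -> Omega,
    finitary_dilution P phi /\ min_gap_ge (pushforward P phi) m.
Proof.
move=> [stP ntP] _ apP m m1.
have [a [w [v posw]]] : exists a w, valid m a w /\
    ~ as_ P (fun x => forall n, phiw a w x n = false).
  apply: contrapT => H; apply: ntP.
  pose Qk := fun (k : nat) (x : Omega) =>
      match (unpickle k : option (nat * seq bool)) with
      | Some (a, w) => valid m a w -> forall n, phiw a w x n = false
      | None => True end.
  have H1 : forall k : nat, as_ P (Qk k).
    move=> k; rewrite /Qk; case: (unpickle k) => [[a w]|]; last exact: as_all.
    case: (pselect (valid m a w)) => v; last by apply: as_all.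
    have : as_ P (fun x => forall n, phiw a w x n = false).
      by apply: contrapT => nA; apply: H; exists a, w.
    rewrite /as_; apply: filterS => x /= Hx _; exact: Hx.
  have H2 : as_ P (fun x => forall k, Qk k x) := @ae_foralln _ _ R P Qk H1.
  move: apP H2; rewrite /as_ => apP H2.
  have FP := ae_filter_ringOfSetsType P.
  have := filterI H2 apP; move=> /(_ FP).
  rewrite /as_; apply: filterS => x [Hall Hap] n.
  apply/negP => xn.
  have [a [w [v ph]]] : exists a w, valid m a w /\ phiw a w x n.
    apply: (@exists_window m x n xn) => d d0.
    apply: contrapT => Hn; apply: Hap; exists d; split => // k.
    apply/eqP; apply: contrapT => hk; apply: Hn; exists k; exact/negP.
  have := Hall (pickle (a, w)); rewrite /Qk pickleK => /(_ v n).
  by rewrite ph.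
have mphi := phiw_meas a w.
have Hsep : forall x n d, (0 < d < m)%N -> phiw a w x n ->
    phiw a w x (n + d%:Z)%R -> False.
  by move=> x n d; exact: phiw_sep.
exists (phiw a w); split; first split.
- exact: mphi.
- exact: phiw_shift.
- apply: as_all => x; exists (a + size w)%N => y Hy; exact: phiw_finitary.
- move=> x n; exact: (@phiw_le a w m x n v).
- split.
  + move=> A mA; rewrite /pushforward.
    have mpA : measurable (phiw a w @^-1` A).
      by have := mphi measurableT A mA; rewrite setTI.
    have -> : phiw a w @^-1` (Defs.shift @^-1` A) =
              Defs.shift @^-1` (phiw a w @^-1` A).
      by apply/funext => x; rewrite /preimage /= phiw_shift.
    exact: stP.
  + move=> H; apply: posw; exact: (@as_push R P (phiw a w) _ mphi H).
- pose Sep := \bigcup_(k : nat) \bigcup_(d in [set d : nat | (0 < d < m)%N])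
    (([set y : Omega | y (k%:Z)%R = true] `&` [set y | y (k%:Z + d%:Z)%R = true]) `|`
     ([set y : Omega | y (- k%:Z)%R = true] `&` [set y | y (- k%:Z + d%:Z)%R = true])).
  exists Sep; split.
  + apply: bigcupT_measurable => k; apply: bigcup_measurable => d _.
    by apply: measurableU; apply: measurableI; exact: coord_meas.
  + rewrite /pushforward.
    have -> : phiw a w @^-1` Sep = set0.
      apply/seteqP; split => x //=.
      move=> [k _ [d hd [[h1 h2]|[h1 h2]]]]; exact: (Hsep x _ d hd h1 h2).
    exact: measure0.
  + move=> y /= nI; apply: contrapT => nS; apply: nI.
    apply: gap_lemma m1 _ => n d hd yn ynd; apply: nS.
    exists (absz n) => //; exists d => //.
    case: (@Order.TotalTheory.leP _ int 0%R n) => hn.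
    * left; have e : ((absz n)%:Z)%R = n by lia.
      by rewrite e; split.
    * right; have e : (- (absz n)%:Z)%R = n by lia.
      by rewrite e; split.
Qed.
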